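(* Let $G$ be a connected block graph on $n$ vertices with set of cut vertices $V_c(G)$, and let $k$ be an integer with $2\le k\le n$. Then $$SW_k(G)=\sum_{v\in V_c(G)} N_k(G\setminus v) + (k-1)\binom{n}{k}.$$
   Context: A block graph is a graph in which every block (maximal connected induced subgraph without cut vertices) is a clique. For connected $G$ and $S\subseteq V(G)$, the Steiner distance $d(S)$ is the minimum number of edges of a connected subgraph of $G$ whose vertex set contains $S$, and $SW_k(G)=\sum_{S\subseteq V(G),|S|=k} d(S)$. $G\setminus v$ is the graph obtained by deleting vertex $v$. For a graph $H$ with $p>1$ connected components $H_1,\dots,H_p$, $$N_k(H)=\sum_{\substack{l_1+\cdots+l_p=k\\0\le l_1,\dots,l_p<k}}\binom{|V(H_1)|}{l_1}\cdots\binom{|V(H_p)|}{l_p},$$ i.e. the number of $k$-subsets of $V(H)$ not contained in a single component; conventions $\binom{m}{0}=1$, $\binom{m}{l}=0$ for $m<l$. *)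

(* Defs.v *)
(* A simple graph is a symmetric irreflexive relation e on a finType T. *)
From mathcomp Require Import all_boot.
Set Implicit Arguments. Unset Strict Implicit. Unset Printing Implicit Defensive.

Section Graphs.
Variables (T : finType) (e : rel T).

Definition induced (W : {set T}) : rel T :=
  fun x y => [&& x \in W, y \in W & e x y].

Definition connectedb (W : {set T}) : bool :=
  [forall x in W, forall y in W, connect (induced W) x y].

Definition nonseparable (W : {set T}) : bool :=
  connectedb W && [forall v in W, connectedb (W :\ v)].

Definition is_block (B : {set T}) : bool :=
  nonseparable B && [forall B' : {set T}, (B \proper B') ==> ~~ nonseparable B'].

Definition clique (B : {set T}) : bool :=
  [forall x in B, forall y in B, (x != y) ==> e x y].

Definition block_graph : Prop := forall B : {set T}, is_block B -> clique B.

Definition cut_vertices : {set T} := [set v | ~~ connectedb [set~ v]].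

(* A subgraph (W, F) of G: F is a set of edges {x,y} of G with x, y in W. *)
Definition subgraph_edge (W : {set T}) (f : {set T}) : bool :=
  [exists x, exists y, [&& e x y, x \in W, y \in W & f == [set x; y]]].

Definition subgraph_connected (W : {set T}) (F : {set {set T}}) : bool :=
  [forall x in W, forall y in W,
     connect (fun a b => [set a; b] \in F) x y].

Definition steiner_candidate (S : {set T}) (p : {set T} * {set {set T}}) : bool :=
  [&& S \subset p.1, [forall f in p.2, subgraph_edge p.1 f]
    & subgraph_connected p.1 p.2].

(* The default value #|{set T}| bounds every edge count, so it
   never affects the minimum when a candidate exists (e.g. G connected). *)
Definition steiner_dist (S : {set T}) : nat :=
  \big[minn/#|{: {set T}}|]_(p : {set T} * {set {set T}} | steiner_candidate S p)
     #|p.2|.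

Definition steiner_wiener (k : nat) : nat :=
  \sum_(S : {set T} | #|S| == k) steiner_dist S.

Definition component (W : {set T}) (u : T) : {set T} :=
  [set w in W | connect (induced W) u w].

Definition Nk (W : {set T}) (k : nat) : nat :=
  #|[set S : {set T} | [&& S \subset W, #|S| == k &
        ~~ [exists u in W, S \subset component W u]]]|.

End Graphs.

(* Main.v *)
Require Import Defs.
From mathcomp Require Import all_boot zify.
Set Implicit Arguments. Unset Strict Implicit. Unset Printing Implicit Defensive.

Lemma bigmin_le (I : finType) (P : pred I) (F : I -> nat) M p0 :
  P p0 -> \big[minn/M]_(i | P i) F i <= F p0.
Proof.
move=> Pp0; rewrite /index_enum; have : p0 \in index_enum I by apply: mem_index_enum.
rewrite /index_enum.
elim: (Finite.enum I) => [//|x r IH]; rewrite inE big_cons.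
case/orP=> [/eqP<-|/IH H]; first by rewrite Pp0 geq_minl.
by case: (P x) => //; apply: leq_trans (geq_minr _ _) H.
Qed.

Section Dist.
Variables (T : finType) (R : rel T) (r : T).

Definition reach n x := [exists p : n.-tuple T, path R x p && (last x p == r)].

Lemma reachP n x :
  reflect (exists p, [/\ size p = n, path R x p & last x p = r]) (reach n x).
Proof.
apply: (iffP existsP) => [[p /andP[H1 /eqP H2]]|[p [Hs H1 H2]]].
  by exists (val p); rewrite size_tuple.
have Hs' : size p == n by apply/eqP.
by exists (Tuple Hs'); rewrite /= H1 H2 eqxx.
Qed.

Definition dist x := find (reach ^~ x) (iota 0 #|T|).

Lemma dist_spec x : connect R x r -> dist x < #|T| /\ reach (dist x) x.
Proof.
case/connectP=> p Hp; case: (shortenP Hp) => p' Hp' Hu _ Hl.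
have Hsz : size p' < #|T|.
  move/card_uniqP: Hu => /= <-; exact: max_card.
have Hh : has (reach ^~ x) (iota 0 #|T|).
  apply/hasP; exists (size p'); first by rewrite mem_iota.
  by apply/reachP; exists p'; split.
have Hlt : dist x < #|T| by move: Hh; rewrite has_find size_iota.
split=> //; have := nth_find 0 Hh; rewrite nth_iota //.
Qed.

Lemma dist_min x m : reach m x -> m < #|T| -> dist x <= m.
Proof.
move=> Hr Hm; rewrite leqNgt; apply/negP => Hlt.
by have := before_find 0 Hlt; rewrite nth_iota // Hr.
Qed.

Lemma dist_step x : connect R x r -> x != r ->
  exists y, [&& R x y, dist y < dist x & connect R y r].
Proof.
move=> Hc Hxr; case: (dist_spec Hc) => Hd /reachP[[|y p] [Hs Hp Hl]].
  by move: Hl => /= Hl; rewrite Hl eqxx in Hxr.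
move: Hp => /= /andP[Hxy Hp]; exists y; rewrite Hxy /=.
have Hry : reach (size p) y by apply/reachP; exists p.
have Hlt : size p < dist x by rewrite -Hs.
rewrite (leq_ltn_trans (dist_min Hry _)) //; last exact: ltn_trans Hd.
by apply/connectP; exists p.
Qed.

Definition par x := odflt x [pick y | R x y && (dist y < dist x)].

Lemma par_spec x : connect R x r -> x != r -> R x (par x) && (dist (par x) < dist x).
Proof.
move=> Hc Hxr; rewrite /par; case: pickP => [y -> //|H].
case: (dist_step Hc Hxr) => y /and3P[H1 H2 _].
by have := H y; rewrite H1 H2.
Qed.

End Dist.

Section Span.
Variable T : finType.

Lemma span_lower (F : {set {set T}}) (W : {set T}) r :
  r \in W -> (forall x, x \in W -> connect [rel a b | [set a; b] \in F] x r) ->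
  #|W| <= #|F| + 1.
Proof.
move=> rW HW; set R := [rel a b | [set a; b] \in F].
rewrite (cardsD1 r W) rW addnC leq_add2r.
pose f x := [set x; par R r x].
have Hin : forall x, x \in W :\ r -> R x (par R r x) && (dist R r (par R r x) < dist R r x).
  by move=> x /setD1P[Hxr HxW]; apply: par_spec => //; apply: HW.
rewrite -(card_in_imset (f := f)); last first.
  move=> x1 x2 H1 H2 Hf; case: (eqVneq x1 x2) => // Hne; exfalso.
  have := Hin _ H1; have := Hin _ H2 => /andP[_ L2] /andP[_ L1].
  have Hx1 : x1 \in f x2 by rewrite -Hf !inE eqxx.
  have Hx2 : x2 \in f x1 by rewrite Hf !inE eqxx.
  move: Hx1 Hx2; rewrite !inE (negbTE Hne) (eq_sym x2) (negbTE Hne) /= => /eqP E1 /eqP E2.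
  by move: L1 L2; rewrite -E1 -E2 => L1 L2; have := ltn_trans L1 L2; rewrite ltnn.
apply: subset_leq_card; apply/subsetP => _ /imsetP[x Hx ->].
by case/andP: (Hin _ Hx).
Qed.

Lemma span_upper (e : rel T) (W : {set T}) r :
  symmetric e -> r \in W -> connectedb e W ->
  exists F : {set {set T}}, [&& [forall f in F, subgraph_edge e W f],
     subgraph_connected W F & #|F| <= #|W| - 1].
Proof.
move=> He rW /forallP HW.
have Hc : forall x, x \in W -> connect (induced e W) x r.
  by move=> x xW; move: (HW x); rewrite xW /= => /forallP /(_ r); rewrite rW.
set R := induced e W.
pose F := [set [set x; par R r x] | x in W :\ r].
set RF := [rel a b | [set a; b] \in F].
have Hedge : forall x, x \in W -> x != r -> R x (par R r x) && (dist R r (par R r x) < dist R r x).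
  by move=> x xW xr; apply: par_spec => //; apply: Hc.
have symRF : connect_sym RF.
  by apply: sym_connect_sym => a b; rewrite /= setUC.
have HF : forall n x, dist R r x < n -> connect R x r -> connect RF x r.
  elim=> [//|n IH] x Hd Hcx.
  have [->|Hxr] := eqVneq x r; first exact: connect0.
  have xW : x \in W.
    by case: (dist_step Hcx Hxr) => y /and3P[/and3P[] ].
  case/andP: (Hedge x xW Hxr) => Hxy Hdy.
  apply: connect_trans (connect1 _) (IH _ _ _).
  - by rewrite /= /F; apply/imsetP; exists x => //; rewrite !inE Hxr.
  - by rewrite -ltnS; apply: leq_trans Hdy Hd.
  - case/andP: Hxy => _ /andP[pW _]; exact: Hc.
exists F; apply/and3P; split.
- apply/forallP => f; apply/implyP => /imsetP[x /setD1P[Hxr xW] ->].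
  case/andP: (Hedge x xW Hxr) => /and3P[H1 H2 H3] _.
  by apply/existsP; exists x; apply/existsP; exists (par R r x); rewrite H1 H2 H3 eqxx.
- apply/forallP => x; apply/implyP => xW; apply/forallP => y; apply/implyP => yW.
  apply: connect_trans (HF _ _ (ltnSn _) (Hc x xW)) _.
  by rewrite symRF; apply: HF (ltnSn _) (Hc y yW).
- by rewrite /F (leq_trans (leq_imset_card _ _)) // (cardsD1 r W) rW add1n subn1.
Qed.
End Span.

Section G.
Variables (T : finType) (e : rel T).
Hypotheses (esym : symmetric e) (eirr : irreflexive e).

Lemma induced_sym (W : {set T}) : symmetric (induced e W).
Proof. by move=> x y; rewrite /induced esym andbCA. Qed.

Lemma induced_csym (W : {set T}) : connect_sym (induced e W).
Proof. exact/sym_connect_sym/induced_sym. Qed.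

Lemma hub_conn (W : {set T}) h : (forall y, y \in W -> connect (induced e W) h y) -> connectedb e W.
Proof.
move=> H; apply/forallP => x; apply/implyP => xW; apply/forallP => y; apply/implyP => yW.
by apply: connect_trans (H y yW); rewrite induced_csym; apply: H.
Qed.

Lemma conn_of (W : {set T}) x y : connectedb e W -> x \in W -> y \in W -> connect (induced e W) x y.
Proof. by move=> /forallP /(_ x) /implyP H xW yW; move: (H xW) => /forallP /(_ y) /implyP; apply. Qed.

Lemma path_in (A : {set T}) x s : path (induced e A) x s -> x \in A -> {subset x :: s <= A}.
Proof.
elim: s x => [|y s IH] x /=; first by move=> _ xA z; rewrite inE => /eqP->.
case/andP=> /and3P[_ yA _] Hp xA z; rewrite inE => /orP[/eqP->//|]; exact: IH.
Qed.

Lemma path_mono (A B : {set T}) x s : path (induced e A) x s -> {subset x :: s <= B} ->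
  path (induced e B) x s.
Proof.
move=> Hp Hs; apply: (@sub_in_path _ (mem B) (induced e A)) Hp.
  by move=> a b aB bB /and3P[_ _ H]; rewrite /induced aB bB H.
by apply/allP.
Qed.

Lemma connect_mono (A B : {set T}) x y : A \subset B -> connect (induced e A) x y ->
  connect (induced e B) x y.
Proof.
move=> /subsetP AB; apply: connect_sub => a b /and3P[aA bA H].
by apply: connect1; rewrite /induced (AB _ aA) (AB _ bA).
Qed.

Lemma block_ext (C : {set T}) : nonseparable e C -> exists2 B, is_block e B & C \subset B.
Proof.
move=> HC.
have P0 : (fun B : {set T} => nonseparable e B && (C \subset B)) C by rewrite HC subxx.
case: (@arg_maxnP _ C (fun B : {set T} => nonseparable e B && (C \subset B)) (fun B : {set T} => #|B|) P0) => B /andP[HB CB] Hmax.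
exists B => //; rewrite /is_block HB /=; apply/forallP => B'; apply/implyP => HBB'.
apply/negP => HB'; have := Hmax B'; rewrite HB' (subset_trans CB (proper_sub HBB')) /=.
by move=> /(_ isT); rewrite leqNgt proper_card.
Qed.

Hypothesis bg : block_graph e.

Lemma lemmaB v u1 u2 : e v u1 -> e v u2 -> u1 != u2 ->
  connect (induced e [set~ v]) u1 u2 -> e u1 u2.
Proof.
move=> ev1 ev2 u12 /connectP[p0 Hp0 E]; move: E.
case: (shortenP Hp0) => p Hp Hu _ {p0 Hp0} E.
have u1v : u1 \in [set~ v] by rewrite !inE eq_sym; apply/negP => /eqP E0; rewrite E0 eirr in ev1.
have qv : {subset u1 :: p <= [set~ v]} by apply: path_in.
set C := [set y | (y == v) || (y \in u1 :: p)].
have vC : v \in C by rewrite inE eqxx.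
have qC : {subset u1 :: p <= C} by move=> y yq; rewrite inE yq orbT.
have vq : v \notin u1 :: p by apply/negP => /qv; rewrite !inE eqxx.
have u2q : u2 \in u1 :: p by rewrite E mem_last.
have HC : nonseparable e C.
  apply/andP; split.
    apply: (@hub_conn _ v) => y; rewrite inE => /orP[/eqP->|yq]; first exact: connect0.
    apply: (@connect_trans _ _ u1); first by apply: connect1; rewrite /induced vC qC ?mem_head.
    by apply: (path_connect (path_mono Hp qC)).
  apply/forallP => x; apply/implyP => xC.
  have [->|xv] := eqVneq x v.
    apply: (@hub_conn _ u1) => y; rewrite !inE => /andP[yv /orP[/eqP E1|yq]].
      by rewrite E1 eqxx in yv.
    apply: (path_connect (path_mono Hp _)) yq => z zq.
    by rewrite in_setD1 qC // andbT; apply/negP => /eqP E1; move: vq; rewrite -E1 zq.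
  have vCx : v \in C :\ x by rewrite in_setD1 eq_sym xv.
  apply: (@hub_conn _ v) => y; rewrite !inE => /andP[yx /orP[/eqP->|yq]]; first exact: connect0.
  have [p1 [p2 [Ep Hl]]] : exists p1 p2, p = p1 ++ p2 /\ last u1 p1 = y.
    by case/splitPl: yq => p1 p2 Hl; exists p1, p2.
  move: Hu Hp E; rewrite Ep.
  rewrite -cat_cons cat_uniq => /and3P[_ Hdis _]; rewrite cat_path => /andP[Hp1 Hp2].
  rewrite last_cat Hl => E.
  have xin : x \in (u1 :: p1) ++ p2 by move: xC; rewrite inE (negbTE xv) Ep.
  have qC' : {subset (u1 :: p1) ++ p2 <= C} by move=> z zq; apply: qC; rewrite Ep.
  rewrite mem_cat in xin; case/orP: xin => xin.
    (* x in prefix: use suffix from y *)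
    have xp2 : x \notin p2 by apply/negP => xp2; move/hasP: Hdis; apply; exists x.
    have ysub : {subset y :: p2 <= C :\ x}.
      move=> z; rewrite inE => /orP[/eqP->|zp2].
        by rewrite in_setD1 yx qC // -Hl mem_last.
      rewrite in_setD1 qC' ?mem_cat ?zp2 ?orbT // andbT.
      by apply/negP => /eqP E'; move: xp2; rewrite -E' zp2.
    have Hs : path (induced e (C :\ x)) y p2 by rewrite Hl in Hp2; exact: path_mono Hp2 ysub.
    apply: (@connect_trans _ _ u2).
      apply: connect1; rewrite /induced vCx ev2 andbT.
      by rewrite E; apply: ysub; apply: mem_last.
    rewrite induced_csym E; apply/connectP; exists p2 => //.
  have xp1 : x \notin u1 :: p1 by apply/negP => xp1; move/hasP: Hdis; apply; exists x.
  have psub : {subset u1 :: p1 <= C :\ x}.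
    move=> z zq; rewrite in_setD1 qC' ?mem_cat ?zq // andbT.
    by apply/negP => /eqP E'; move: xp1; rewrite -E' zq.
  apply: (@connect_trans _ _ u1).
    by apply: connect1; rewrite /induced vCx ev1 psub ?mem_head.
  by apply/connectP; exists p1 => //; exact: path_mono Hp1 psub.
case: (block_ext HC) => B /bg Hcl CB.
move/forallP: Hcl => /(_ u1) /implyP; rewrite (subsetP CB) ?qC ?mem_head //.
move=> /(_ isT) /forallP /(_ u2) /implyP; rewrite (subsetP CB) ?qC //.
by move=> /(_ isT) /implyP; apply.
Qed.

End G.

Section M.
Variables (T : finType) (e : rel T).
Hypotheses (esym : symmetric e) (eirr : irreflexive e) (bg : block_graph e).

Definition sepb (S : {set T}) v :=
  (S \subset [set~ v]) && ~~ [exists u in [set~ v], S \subset component e [set~ v] u].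
Definition sep (S : {set T}) := [set v | sepb S v].

Lemma sep_disj S : S :&: sep S = set0.
Proof.
apply/setP => x; rewrite !inE; apply/negP => /andP[xS /andP[/subsetP H _]].
by have := H x xS; rewrite !inE eqxx.
Qed.

Lemma card_Ssep S : #|S :|: sep S| = #|S| + #|sep S|.
Proof. by rewrite cardsU sep_disj cards0 subn0. Qed.

Lemma good_sep (W S : {set T}) : S \subset W -> connectedb e W -> S != set0 ->
  sep S \subset W.
Proof.
move=> SW cW /set0Pn[s0 s0S]; apply/subsetP => v; rewrite inE => /andP[SV Hn].
apply/negPn/negP => vW; apply: (negP Hn); apply/existsP; exists s0.
rewrite (subsetP SV) //=; apply/subsetP => s sS; rewrite inE (subsetP SV) //=.
have WV : W \subset [set~ v].
  by apply/subsetP => w wW; rewrite !inE; apply/negP => /eqP E; rewrite -E wW in vW.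
by apply: connect_mono WV _; apply: conn_of; rewrite // (subsetP SW).
Qed.

Lemma sep_cut S : S != set0 -> sep S \subset cut_vertices e.
Proof.
move=> /set0Pn[s0 s0S]; apply/subsetP => v; rewrite !inE => /andP[SV Hn].
apply/negP => cV; apply: (negP Hn); apply/existsP; exists s0.
rewrite (subsetP SV) //=; apply/subsetP => s sS; rewrite inE (subsetP SV) //=.
by apply: conn_of; rewrite // (subsetP SV).
Qed.

Lemma Kclosed (v u : T) x s : x \in component e [set~ v] u ->
  path (induced e [set~ v]) x s -> {subset x :: s <= component e [set~ v] u}.
Proof.
elim: s x => [|y s IH] x /=; first by move=> xK _ z; rewrite inE => /eqP->.
move=> xK /andP[Hxy Hp] z; rewrite inE => /orP[/eqP->//|zs].
have yK : y \in component e [set~ v] u.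
  case/and3P: (Hxy) => _ yV _; move: xK; rewrite !inE => /andP[_ Hux].
  move: yV; rewrite !inE => -> /=; exact: connect_trans Hux (connect1 Hxy).
exact: (IH y yK Hp).
Qed.

Lemma min_conn (W0 : {set T}) v u : connectedb e W0 ->
  connectedb e (W0 :&: component e [set~ v] u).
Proof.
move=> cW; set K := component e [set~ v] u; set W' := W0 :&: K.
have KV : forall x, x \in K -> x \in [set~ v] by move=> x; rewrite inE => /andP[].
apply/forallP => a; apply/implyP => aW'; apply/forallP => b; apply/implyP => bW'.
have [aW aK] : a \in W0 /\ a \in K by move: aW'; rewrite inE => /andP[].
have [bW bK] : b \in W0 /\ b \in K by move: bW'; rewrite inE => /andP[].
have /connectP[p0 Hp0 E0] := conn_of cW aW bW; move: E0.
case: (shortenP Hp0) => p Hp Hu _ {p0 Hp0} Eb.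
have av : a != v by move: (KV a aK); rewrite !inE.
have bv : b != v by move: (KV b bK); rewrite !inE.
have qW := path_in Hp aW.
have mv : forall x s, x \in K -> path (induced e W0) x s -> {subset x :: s <= W0} ->
    v \notin x :: s -> path (induced e W') x s /\ {subset x :: s <= K}.
  move=> x s xK Hs sW vs.
  have sV : {subset x :: s <= [set~ v]}.
    by move=> z zs; rewrite !inE; apply/negP => /eqP E; move: vs; rewrite -E zs.
  have Hs' := path_mono Hs sV.
  have sK := Kclosed xK Hs'.
  split=> //; apply: path_mono Hs _ => z zs; rewrite inE sW // sK //.
case Hvp: (v \in p).
  have [p1 [p2 Ep]] : exists p1 p2, p = p1 ++ v :: p2.
    by case/splitPr: Hvp => p1 p2; exists p1, p2.
  move: Hu Hp Eb qW; rewrite {}Ep -cat_cons cat_uniq => /and3P[_ Hdis Hu2].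
  rewrite cat_path => /andP[Hp1 /= /andP[Hu1v Hp2]].
  rewrite last_cat /=; case: p2 Hdis Hu2 Hp2 => [|u2 p3] Hdis Hu2 Hp2 /=.
    by move=> Eb; rewrite Eb eqxx in bv.
  move=> Eb qW; move: Hp2 => /andP[Hvu2 Hp3].
  set u1 := last a p1 in Hu1v Hdis.
  have u1q : u1 \in a :: p1 by apply: mem_last.
  have qW1 : {subset a :: p1 <= W0} by move=> z zq; apply: qW; rewrite -cat_cons mem_cat zq.
  have qW2 : {subset u2 :: p3 <= W0}.
    by move=> z zq; apply: qW; rewrite -cat_cons mem_cat; apply/orP; right; rewrite inE zq orbT.
  have vp1 : v \notin a :: p1 by apply/negP => vq; move/hasP: Hdis; apply; exists v; rewrite ?inE ?eqxx.
  have vp2 : v \notin u2 :: p3 by move: Hu2; rewrite cons_uniq => /andP[].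
  have u2p1 : u2 \notin a :: p1.
    by apply/negP => uq; move/hasP: Hdis; apply; exists u2; rewrite // !inE eqxx orbT.
  have [Hw1 K1] := mv _ _ aK Hp1 qW1 vp1.
  have u1K : u1 \in K by apply: K1.
  have u2V : {subset u2 :: p3 <= [set~ v]}.
    by move=> z zs; rewrite !inE; apply/negP => /eqP E; move: vp2; rewrite -E zs.
  have u2K : u2 \in K.
    have Hc : connect (induced e [set~ v]) u2 b.
      by apply/connectP; exists p3 => //; apply: path_mono Hp3 u2V.
    move: bK; rewrite inE => /andP[_ Hub]; rewrite /K inE u2V ?mem_head //=.
    by apply: connect_trans Hub _; rewrite induced_csym.
  have [Hw2 K2] := mv _ _ u2K Hp3 qW2 vp2.
  have e12 : e u1 u2.
    apply: (lemmaB esym eirr bg (v := v)).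
    - by case/and3P: Hu1v => _ _; rewrite esym.
    - by case/and3P: Hvu2.
    - by apply/negP => /eqP E; move: u2p1; rewrite -E u1q.
    - move: u1K u2K; rewrite !inE => /andP[_ H1] /andP[_ H2].
      by apply: connect_trans H2; rewrite induced_csym.
  apply: (@connect_trans _ _ u1).
    by apply/connectP; exists p1.
  apply: (@connect_trans _ _ u2).
    by apply: connect1; rewrite /induced !in_setI u1K u2K qW1 // qW2 ?mem_head // e12.
  by apply/connectP; exists p3.
have vq : v \notin a :: p by rewrite inE negb_or eq_sym av Hvp.
have [Hw _] := mv _ _ aK Hp qW vq.
by apply/connectP; exists p.
Qed.

End M.

Section N.
Variables (T : finType) (e : rel T).
Hypotheses (esym : symmetric e) (eirr : irreflexive e) (bg : block_graph e)
  (hconn : connectedb e [set: T]).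

Lemma min_good (S : {set T}) : exists W : {set T}, [/\ S \subset W, connectedb e W & W \subset S :|: sep e S].
Proof.
pose P (W : {set T}) := (S \subset W) && connectedb e W.
have P0 : P setT by rewrite /P subsetT hconn.
case: (@arg_minnP _ setT P (fun W => #|W|) P0) => W /andP[SW cW] Hmin.
exists W; split => //.
apply/subsetP => v vW; rewrite in_setU; case vS: (v \in S) => //=.
rewrite inE /sepb.
have SV : S \subset [set~ v].
  by apply/subsetP => s sS; rewrite !inE; apply/negP => /eqP E; rewrite -E sS in vS.
rewrite SV /=; apply/negP => /existsP[u /andP[uV SK]].
have := Hmin (W :&: component e [set~ v] u).
rewrite /P subsetI SW SK (@min_conn _ _ esym eirr bg) //= => /(_ isT).
rewrite leqNgt => /negP; apply; apply: proper_card; apply/properP; split; first exact: subsetIl.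
by exists v => //; rewrite !inE eqxx /= ?andbF.
Qed.

Lemma RF_induced (W : {set T}) (F : {set {set T}}) a b :
  [forall f in F, subgraph_edge e W f] -> [set a; b] \in F -> induced e W a b.
Proof.
move/forallP => H Hab; move: (H [set a; b]); rewrite Hab /=.
case/existsP=> x /existsP[y /and4P[Exy xW yW /eqP E]].
have ain : a \in [set x; y] by rewrite -E !inE eqxx.
have bin : b \in [set x; y] by rewrite -E !inE eqxx orbT.
have xin : x \in [set a; b] by rewrite E !inE eqxx.
have yin : y \in [set a; b] by rewrite E !inE eqxx orbT.
move: ain bin; rewrite !inE => /orP[/eqP Ea|/eqP Ea] /orP[/eqP Eb|/eqP Eb]; subst a b.
- by move: yin; rewrite !inE orbb => /eqP Ey; rewrite Ey eirr in Exy.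
- by rewrite /induced xW yW Exy.
- by rewrite /induced xW yW esym Exy.
- by move: xin; rewrite !inE orbb => /eqP Ey; rewrite Ey eirr in Exy.
Qed.

Lemma sd (S : {set T}) : S != set0 -> steiner_dist e S = #|S| + #|sep e S| - 1.
Proof.
move=> S0; have [s0 s0S] := set0Pn _ S0.
case: (min_good S) => W0 [SW cW WS].
have EW : W0 = S :|: sep e S.
  apply/eqP; rewrite eqEsubset WS subUset SW /=; exact: good_sep.
have s0W : s0 \in W0 by apply: (subsetP SW).
apply/eqP; rewrite eqn_leq; apply/andP; split.
  case: (span_upper esym s0W cW) => F /and3P[HF Hc Hcard].
  apply: leq_trans (@bigmin_le _ (steiner_candidate e S) (fun p => #|p.2|) _ (W0, F) _) _.
    by rewrite /steiner_candidate /= SW HF Hc.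
  by rewrite /= -card_Ssep -EW.
rewrite /steiner_dist; apply: (big_ind (fun x => #|S| + #|sep e S| - 1 <= x)).
- rewrite -card_Ssep; apply: leq_trans (leq_subr _ _) _; apply: leq_trans (max_card _) _.
  rewrite -cardsT -(card_imset [set: T] (@set1_inj T)); exact: max_card.
- by move=> x y Hx Hy; rewrite leq_min Hx Hy.
case=> W F /and3P[/= SW' HF' Hc'].
have cW' : connectedb e W.
  apply/forallP => x; apply/implyP => xW; apply/forallP => y; apply/implyP => yW.
  move/forallP: Hc' => /(_ x) /implyP /(_ xW) /forallP /(_ y) /implyP /(_ yW).
  by apply: connect_sub => a b Hab; apply: connect1; apply: RF_induced HF' Hab.
have SsW : S :|: sep e S \subset W by rewrite subUset SW' good_sep.
have := subset_leq_card SsW; rewrite card_Ssep => H1.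
have H2 : #|W| <= #|F| + 1.
  apply: (span_lower (r := s0)); first exact: (subsetP SW').
  move=> x xW; move/forallP: Hc' => /(_ x) /implyP /(_ xW) /forallP /(_ s0) /implyP.
  by apply; apply: (subsetP SW').
simpl; have H3 : #|W| <= #|F| + 1 := H2.
by rewrite leq_subLR (addnC 1); exact: (leq_trans H1 H3).
Qed.

End N.
Unset Implicit Arguments.

Theorem mainTheorem4 (T : finType) (e : rel T) :
  symmetric e -> irreflexive e ->
  connectedb e [set: T] -> block_graph e ->
  forall k : nat, 2 <= k <= #|T| ->
  steiner_wiener e k =
    \sum_(v in cut_vertices e) Nk e [set~ v] k + (k - 1) * 'C(#|T|, k).
Proof.
move=> esym eirr hconn bg k /andP[k2 kT].
have HNk : forall v, Nk e [set~ v] k = \sum_(S : {set T} | #|S| == k) (v \in sep e S).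
  move=> v; rewrite /Nk -sum1_card big_mkcond [RHS]big_mkcond /=.
  apply: eq_bigr => S _; rewrite !inE /sepb.
  by case: (S \subset _); case: (#|S| == k); case: [exists _ in _, _].
under eq_bigr do rewrite HNk.
rewrite exchange_big /=.
have Hin : forall S : {set T}, #|S| == k ->
    \sum_(v in cut_vertices e) (v \in sep e S) = #|sep e S|.
  move=> S /eqP HS; have S0 : S != set0 by rewrite -card_gt0 HS; apply: leq_trans k2.
  rewrite -sum1_card big_mkcond [RHS]big_mkcond /=; apply: eq_bigr => v _.
  case vs: (v \in sep e S); last by case: (_ \in _).
  by rewrite (subsetP (@sep_cut _ e S S0)).
rewrite (eq_bigr _ Hin).
rewrite /steiner_wiener.
rewrite [LHS](eq_bigr (fun S => k - 1 + #|sep e S|)); last first.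
  move=> S /eqP HS; have S0 : S != set0 by rewrite -card_gt0 HS; apply: leq_trans k2.
  rewrite (sd esym eirr bg hconn S0) HS.
  by rewrite addnC -addnBA 1?addnC // ltnW.
rewrite big_split /= addnC; congr (_ + _).
rewrite (eq_bigl (fun S => S \in [set S : {set T} | #|S| == k])); last by move=> S; rewrite inE.
by rewrite sum_nat_const card_draws mulnC.
Qed.
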